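(* Let $\chi_1,\chi_2,\dots$ be an enumeration of all sentences that have a separating model, and let $\mu$ be a probability on sentences. Say $\mu$ has a rigid mixture representation if $\mu(\varphi)=\sum_{i=1}^\infty m_i\mu_i(\varphi)$ for all sentences $\varphi$, for some reals $m_i>0$ with $\sum_i m_i=1$ and some probabilities on sentences $\mu_i$ with $\mu_i(\chi_i)=1$ for each $i$. Then: (a) $\mu$ is Cournot if and only if $\mu$ has a rigid mixture representation; (b) $\mu$ is Cournot and Gaifman if and only if $\mu$ has a rigid mixture representation in which all $\mu_i$ are Gaifman.
   Context: Setting: higher-order logic (Church's simple theory of types, without a description operator). Types are generated from $o$ and $\imath$ by $\alpha\to\beta$; terms are built from variables and constants (including equality $=_{\alpha\to\alpha\to o}$) by $\lambda$-abstraction and application; sentences are closed terms of type $o$, $\mathcal S$ the set of sentences. Henkin semantics: an interpretation $I$ consists of domains $D_\alpha$ ($D_o=\{\mathsf T,\mathsf F\}$, $D_{\alpha\to\beta}$ a set of functions) and a valuation of constants such that every term has a denotation; $V(t,I)$ is the denotation of closed $t$. A sentence is valid if true in every interpretation. $I$ is separating if for all closed terms $r,s$ of the same function type $\alpha\to\beta$ with $V(r,I)\neq V(s,I)$ there is a closed term $t$ of type $\alpha$ (over the given alphabet) with $V((r\,t),I)\neq V((s\,t),I)$; a separating model of a sentence is a separating interpretation in which it is true. A probability on sentences is a non-negative $\mu:\mathcal S\to\mathbb R$ with $\mu(\varphi)=1$ for valid $\varphi$ and $\mu(\varphi\vee\psi)=\mu(\varphi)+\mu(\psi)$ whenever $\neg(\varphi\wedge\psi)$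 is valid. $\mu$ is Gaifman if for all closed terms $r,s$ of the same function type $\alpha\to\beta$, $\mu(r=s)=\inf_{\{t_1,\dots,t_n\}}\mu(\bigwedge_{i=1}^n((r\,t_i)=(s\,t_i)))$ over all finite sets of closed terms of type $\alpha$. $\mu$ is Cournot if $\mu(\varphi)>0$ for every sentence with a separating model. *)

(* Defs.v *)
(* Higher-order logic (Church's simple type theory, Q0-style:
   the only logical constants are the equalities =_alpha), Henkin semantics,
   probabilities on sentences, Gaifman and Cournot conditions. *)
From Stdlib Require Import Reals List.
Open Scope R_scope.

Inductive ty : Type := To | Ti | Arr (a b : ty).

Record Sig : Type := { const : Type; ctyp : const -> ty }.

Inductive var : list ty -> ty -> Type :=
| VZ : forall G a, var (a :: G) a
| VS : forall G a b, var G a -> var (b :: G) a.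
Arguments VZ {G a}.
Arguments VS {G a b} v.

Inductive tm (S : Sig) (G : list ty) : ty -> Type :=
| tVar : forall a, var G a -> tm S G a
| tCon : forall c : const S, tm S G (ctyp S c)
| tEq  : forall a, tm S G (Arr a (Arr a To))
| tLam : forall a b, tm S (a :: G) b -> tm S G (Arr a b)
| tApp : forall a b, tm S G (Arr a b) -> tm S G a -> tm S G b.
Arguments tVar {S G a} v.
Arguments tCon {S G} c.
Arguments tEq {S G} a.
Arguments tLam {S G a b} t.
Arguments tApp {S G a b} t u.

Definition sentence (S : Sig) : Type := tm S nil To.

Fixpoint env (D : ty -> Type) (G : list ty) : Type :=
  match G with nil => unit | a :: G' => (D a * env D G')%type end.

Fixpoint lookup (D : ty -> Type) (G : list ty) (a : ty) (v : var G a)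
  : env D G -> D a :=
  match v in var G a return env D G -> D a with
  | @VZ G a => fun e => fst e
  | @VS G a b v' => fun e => lookup D G a v' (snd e)
  end.

(** D a is the domain of type a;
    D (Arr a b) is (via the injective application map [app]) a set of
    functions D a -> D b; D To is the two-element set of truth values
    (identified with bool by the bijection [tval]); every term has a
    denotation [den], satisfying the usual compositional clauses. *)
Record interp (S : Sig) : Type := {
  dom : ty -> Type;
  dom_ne : forall a, inhabited (dom a);
  app : forall a b, dom (Arr a b) -> dom a -> dom b;
  app_ext : forall a b (f g : dom (Arr a b)),
      (forall x, app a b f x = app a b g x) -> f = g;
  tval : dom To -> bool;
  tval_inj : forall x y, tval x = tval y -> x = y;
  tval_surj : forall bv, exists x, tval x = bv;
  cval : forall c : const S, dom (ctyp S c);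
  den : forall G a, tm S G a -> env dom G -> dom a;
  den_var : forall G a (v : var G a) e, den G a (tVar v) e = lookup dom G a v e;
  den_con : forall G c e, den G (ctyp S c) (tCon c) e = cval c;
  den_eq : forall G a e x y,
      tval (app a To (app a (Arr a To) (den G _ (tEq a) e) x) y) = true <-> x = y;
  den_lam : forall G a b (t : tm S (a :: G) b) e x,
      app a b (den G _ (tLam t) e) x = den (a :: G) b t (x, e);
  den_app : forall G a b (t : tm S G (Arr a b)) (u : tm S G a) e,
      den G b (tApp t u) e = app a b (den G _ t e) (den G a u e)
}.
Arguments dom {S} i a.
Arguments app {S} i {a b} f x.
Arguments tval {S} i x.
Arguments den {S} i {G a} t e.

Definition V {S : Sig} {a : ty} (t : tm S nil a) (I : interp S) : dom I a :=
  den I t tt.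

Definition true_in {S : Sig} (I : interp S) (phi : sentence S) : Prop :=
  tval I (V phi I) = true.

Definition valid {S : Sig} (phi : sentence S) : Prop :=
  forall I : interp S, true_in I phi.

(** Logical connectives, defined from equality as in Andrews' Q0. *)
Definition teq {S G a} (r s : tm S G a) : tm S G To := tApp (tApp (tEq a) r) s.

Definition tTrue {S G} : tm S G To := teq (tEq To) (tEq To).
Definition tFalse {S G} : tm S G To :=
  teq (tLam (a := To) tTrue) (tLam (a := To) (tVar VZ)).
Definition tNeg {S G} (p : tm S G To) : tm S G To := teq tFalse p.
(* AND := \x y. (\g. g T T) = (\g. g x y) *)
Definition tAND {S G} : tm S G (Arr To (Arr To To)) :=
  tLam (a := To) (tLam (a := To)
    (teq (tLam (a := Arr To (Arr To To)) (tApp (tApp (tVar VZ) tTrue) tTrue))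
         (tLam (a := Arr To (Arr To To))
            (tApp (tApp (tVar VZ) (tVar (VS (VS VZ)))) (tVar (VS VZ)))))).
Definition tAnd {S G} (p q : tm S G To) : tm S G To := tApp (tApp tAND p) q.
Definition tOr {S G} (p q : tm S G To) : tm S G To :=
  tNeg (tAnd (tNeg p) (tNeg q)).

Fixpoint bigAnd {S} (l : list (sentence S)) : sentence S :=
  match l with
  | nil => tTrue
  | p :: nil => p
  | p :: l' => tAnd p (bigAnd l')
  end.

Definition separating {S : Sig} (I : interp S) : Prop :=
  forall a b (r s : tm S nil (Arr a b)),
    V r I <> V s I -> exists t : tm S nil a, V (tApp r t) I <> V (tApp s t) I.

Definition has_sep_model {S : Sig} (phi : sentence S) : Prop :=
  exists I : interp S, separating I /\ true_in I phi.

Definition is_prob {S : Sig} (mu : sentence S -> R) : Prop :=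
  (forall phi, 0 <= mu phi) /\
  (forall phi, valid phi -> mu phi = 1) /\
  (forall phi psi, valid (tNeg (tAnd phi psi)) -> mu (tOr phi psi) = mu phi + mu psi).

Definition is_inf (A : R -> Prop) (x : R) : Prop :=
  (forall y, A y -> x <= y) /\ (forall z, (forall y, A y -> z <= y) -> z <= x).

Definition gaifman {S : Sig} (mu : sentence S -> R) : Prop :=
  forall a b (r s : tm S nil (Arr a b)),
    is_inf (fun x => exists l : list (tm S nil a),
                x = mu (bigAnd (map (fun t => teq (tApp r t) (tApp s t)) l)))
           (mu (teq r s)).

Definition cournot {S : Sig} (mu : sentence S -> R) : Prop :=
  forall phi, has_sep_model phi -> 0 < mu phi.

Definition rigid_mixture {S : Sig} (chi : nat -> sentence S)
    (P : (sentence S -> R) -> Prop) (mu : sentence S -> R) : Prop :=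
  exists (m : nat -> R) (mus : nat -> sentence S -> R),
    (forall i, 0 < m i) /\ infinite_sum m 1 /\
    (forall i, is_prob (mus i)) /\ (forall i, P (mus i)) /\
    (forall i, mus i (chi i) = 1) /\
    (forall phi, infinite_sum (fun i => m i * mus i phi) (mu phi)).

(* Main.v *)
From Stdlib Require Import Reals List Lra Lia Bool Classical.
Require Import Defs.
Open Scope R_scope.

Lemma is_plus a b la lb : infinite_sum a la -> infinite_sum b lb ->
  infinite_sum (fun n => a n + b n) (la + lb).
Proof.
  intros Ha Hb. unfold infinite_sum.
  intros eps He. destruct (CV_plus _ _ _ _ Ha Hb eps He) as [N HN].
  exists N; intros n Hn. rewrite sum_plus. apply HN; auto.
Qed.

Lemma is_scal a l k : infinite_sum a l -> infinite_sum (fun n => k * a n) (k * l).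
Proof.
  intros Ha eps He.
  assert (Hc : Un_cv (fun _ => k) k).
  { intros e He'. exists 0%nat. intros. unfold Rdist. rewrite Rminus_diag, Rabs_R0. lra. }
  destruct (CV_mult _ _ _ _ Hc Ha eps He) as [N HN].
  exists N; intros n Hn. replace (sum_f_R0 (fun n0 => k * a n0) n) with (k * sum_f_R0 a n).
  apply HN; auto.
  rewrite scal_sum. apply sum_eq. intros; ring.
Qed.

Lemma is_ext a b l : (forall n, a n = b n) -> infinite_sum a l -> infinite_sum b l.
Proof.
  intros E Ha eps He. destruct (Ha eps He) as [N HN]. exists N; intros n Hn.
  rewrite <- (sum_eq a b n) by auto. auto.
Qed.

Lemma is_le a l c N : infinite_sum a l -> (forall n, (n >= N)%nat -> sum_f_R0 a n <= c) -> l <= c.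
Proof.
  intros Ha Hb. destruct (Rle_dec l c) as [|Hn]; auto. exfalso.
  destruct (Ha (l - c)) as [M HM]. lra.
  specialize (HM (max N M) ltac:(lia)). specialize (Hb (max N M) ltac:(lia)).
  unfold Rdist in HM. apply Rabs_def2 in HM. lra.
Qed.

Lemma is_ge a l c N : infinite_sum a l -> (forall n, (n >= N)%nat -> c <= sum_f_R0 a n) -> c <= l.
Proof.
  intros Ha Hb. destruct (Rle_dec c l) as [|Hn]; auto. exfalso.
  destruct (Ha (c - l)) as [M HM]. lra.
  specialize (HM (max N M) ltac:(lia)). specialize (Hb (max N M) ltac:(lia)).
  unfold Rdist in HM. apply Rabs_def2 in HM. lra.
Qed.

Lemma sum_nonneg a n : (forall k, 0 <= a k) -> 0 <= sum_f_R0 a n.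
Proof. intros H; induction n; simpl; auto. specialize (H (S n)); lra. Qed.

Lemma sum_mono a n m : (forall k, 0 <= a k) -> (n <= m)%nat -> sum_f_R0 a n <= sum_f_R0 a m.
Proof.
  intros H Hnm. induction Hnm. lra. simpl. specialize (H (S m)); lra.
Qed.

Lemma is_nonneg a l : infinite_sum a l -> (forall k, 0 <= a k) -> 0 <= l.
Proof. intros Ha H. apply (is_ge a l 0 0 Ha). intros; apply sum_nonneg; auto. Qed.

Lemma is_term a l i : infinite_sum a l -> (forall k, 0 <= a k) -> a i <= l.
Proof.
  intros Ha H. apply (is_ge a l (a i) i Ha). intros n Hn.
  apply Rle_trans with (sum_f_R0 a i).
  destruct i; simpl. lra. pose proof (sum_nonneg a i H). lra.
  apply sum_mono; auto.
Qed.

Lemma partial_le a l n : infinite_sum a l -> (forall k, 0 <= a k) -> sum_f_R0 a n <= l.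
Proof.
  intros Ha H. apply (is_ge a l _ n Ha). intros; apply sum_mono; auto.
Qed.

Lemma ex_sum a B : (forall k, 0 <= a k) -> (forall n, sum_f_R0 a n <= B) -> {l | infinite_sum a l}.
Proof.
  intros H HB. destruct (growing_cv (sum_f_R0 a)) as [l Hl].
  intro n. simpl. specialize (H (S n)); lra.
  exists B. intros x [i ->]. apply HB.
  exists l. exact Hl.
Qed.

Lemma is_ind (j : nat) x : infinite_sum (fun i => if Nat.eq_dec i j then x else 0) x.
Proof.
  intros eps He. exists j. intros n Hn.
  assert (sum_f_R0 (fun i => if Nat.eq_dec i j then x else 0) n = x).
  { induction Hn.
    - destruct j. simpl. destruct (Nat.eq_dec 0 0); [reflexivity|congruence].
      rewrite tech5.
      rewrite (sum_eq _ (fun _ => 0)). rewrite sum_cte.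
      destruct (Nat.eq_dec (S j) (S j)) as [_|Hc]; [lra|congruence].
      intros i Hi. destruct (Nat.eq_dec i (S j)); [lia|auto].
    - rewrite tech5, IHHn. destruct (Nat.eq_dec (S m) j); [lia|ring]. }
  rewrite H. unfold Rdist. rewrite Rminus_diag, Rabs_R0; lra.
Qed.

Lemma geom_sum n : sum_f_R0 (fun k => (1/2)^(S k)) n = 1 - (1/2)^(S n).
Proof.
  induction n. simpl. field. rewrite tech5, IHn. simpl. field.
Qed.

Section Sem.
Variable S : Sig.
Variable I : interp S.

Lemma den_teq G a (r s : tm S G a) e :
  tval I (den I (teq r s) e) = true <-> den I r e = den I s e.
Proof. unfold teq. rewrite !den_app. apply den_eq. Qed.

Lemma den_true G e : tval I (den I (@tTrue S G) e) = true.
Proof. unfold tTrue. apply den_teq. reflexivity. Qed.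

Lemma den_false G e : tval I (den I (@tFalse S G) e) = false.
Proof.
  destruct (tval I (den I (@tFalse S G) e)) eqn:H; auto.
  unfold tFalse in H. apply den_teq in H.
  destruct (tval_surj _ I false) as [x Hx].
  assert (H2 := f_equal (fun f => app I f x) H). cbv beta in H2.
  rewrite !den_lam, den_var in H2. cbn [lookup fst] in H2.
  rewrite <- H2, den_true in Hx. discriminate.
Qed.

Lemma den_neg G (p : tm S G To) e :
  tval I (den I (tNeg p) e) = negb (tval I (den I p e)).
Proof.
  unfold tNeg.
  destruct (tval I (den I p e)) eqn:Hp.
  - destruct (tval I (den I (teq tFalse p) e)) eqn:H; auto.
    apply den_teq in H. rewrite <- H, den_false in Hp. discriminate.
  - apply den_teq. apply tval_inj. rewrite Hp, den_false. reflexivity.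
Qed.

Lemma den_and G (p q : tm S G To) e :
  tval I (den I (tAnd p q) e) = tval I (den I p e) && tval I (den I q e).
Proof.
  unfold tAnd, tAND. rewrite !den_app, !den_lam.
  set (P := den I p e). set (Q := den I q e).
  match goal with |- tval I (den I ?t ?en) = _ => destruct (tval I (den I t en)) eqn:H end.
  - apply den_teq in H.
    assert (H1 := f_equal (fun f => app I f (@den S I (To::To::G) _ (tLam (a:=To) (tLam (a:=To) (tVar (VS VZ)))) (Q,(P,e)))) H).
    assert (H2 := f_equal (fun f => app I f (@den S I (To::To::G) _ (tLam (a:=To) (tLam (a:=To) (tVar VZ))) (Q,(P,e)))) H).
    cbv beta in H1, H2. rewrite !den_lam, !den_app, !den_var in H1, H2.
    cbn [lookup fst snd] in H1, H2.
    rewrite !den_lam, !den_var in H1, H2. cbn [lookup fst snd] in H1, H2.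
    assert (tval I P = true) by (rewrite <- H1; apply den_true).
    assert (tval I Q = true) by (rewrite <- H2; apply den_true).
    rewrite H0, H3. reflexivity.
  - destruct (tval I P) eqn:HP, (tval I Q) eqn:HQ; auto.
    exfalso. revert H. match goal with |- tval I (den I ?t ?en) = false -> False =>
      enough (Hb : tval I (den I t en) = true) by congruence end.
    apply den_teq.
    apply app_ext. intros g. rewrite !den_lam, !den_app, !den_var.
    cbn [lookup fst snd].
    assert (E1 : forall u, P = u -> tval I u = true -> forall v, Q = v -> tval I v = true -> P = Q -> True) by auto.
    match goal with |- app I (app I g ?t1) ?t2 = _ =>
      assert (E2 : t1 = P) by (apply tval_inj; rewrite den_true; auto);
      assert (E3 : t2 = Q) by (apply tval_inj; rewrite den_true; auto) end.
    f_equal; [f_equal|]; assumption.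
Qed.
End Sem.

Definition tv {S : Sig} (I : interp S) (phi : sentence S) : bool := tval I (V phi I).

Lemma tv_neg {S} (I : interp S) p : tv I (tNeg p) = negb (tv I p).
Proof. apply den_neg. Qed.
Lemma tv_and {S} (I : interp S) p q : tv I (tAnd p q) = tv I p && tv I q.
Proof. apply den_and. Qed.
Lemma tv_or {S} (I : interp S) p q : tv I (tOr p q) = tv I p || tv I q.
Proof. unfold tOr. rewrite tv_neg, tv_and, !tv_neg. destruct (tv I p), (tv I q); reflexivity. Qed.
Lemma tv_true {S} (I : interp S) : tv I tTrue = true.
Proof. apply den_true. Qed.
Lemma tv_teq {S} (I : interp S) a (r s : tm S nil a) : tv I (teq r s) = true <-> V r I = V s I.
Proof. apply den_teq. Qed.

Lemma tv_bigAnd {S} (I : interp S) l : tv I (bigAnd l) = forallb (tv I) l.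
Proof.
  induction l as [|p l IH]. apply tv_true.
  destruct l as [|q l]. simpl. destruct (tv I p); reflexivity.
  change (bigAnd (p :: q :: l)) with (tAnd p (bigAnd (q :: l))).
  rewrite tv_and, IH. reflexivity.
Qed.

Definition conjs {S} {a b} (r s : tm S nil (Arr a b)) (l : list (tm S nil a)) : sentence S :=
  bigAnd (map (fun t => teq (tApp r t) (tApp s t)) l).

Lemma conjs_eq {S} (I : interp S) a b (r s : tm S nil (Arr a b)) l :
  tv I (teq r s) = true -> tv I (conjs r s l) = true.
Proof.
  intros H. apply tv_teq in H. unfold conjs. rewrite tv_bigAnd. apply forallb_forall.
  intros x Hx. apply in_map_iff in Hx. destruct Hx as [t [<- _]].
  apply tv_teq. unfold V in *. rewrite !den_app, H. reflexivity.
Qed.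

Lemma conjs_app {S} (I : interp S) a b (r s : tm S nil (Arr a b)) l1 l2 :
  tv I (conjs r s (l1 ++ l2)) = true -> tv I (conjs r s l1) = true /\ tv I (conjs r s l2) = true.
Proof.
  unfold conjs. rewrite !tv_bigAnd, map_app, forallb_app. apply andb_prop.
Qed.

Definition equiv {S} (p q : sentence S) := forall I, tv I p = tv I q.
Definition disj {S} (p q : sentence S) := forall I, tv I p && tv I q = false.
Definition impl {S} (p q : sentence S) := forall I, tv I p = true -> tv I q = true.

Definition FM {S} (f : sentence S -> R) : Prop :=
  (forall p, 0 <= f p) /\ (forall p q, equiv p q -> f p = f q) /\
  (forall p q, disj p q -> f (tOr p q) = f p + f q).

Lemma valid_tv {S} (p : sentence S) : valid p <-> forall I, tv I p = true.
Proof. reflexivity. Qed.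

Lemma disj_valid {S} (p q : sentence S) : disj p q <-> valid (tNeg (tAnd p q)).
Proof.
  unfold disj; rewrite valid_tv. split; intros H I; specialize (H I);
  rewrite ?tv_neg, ?tv_and in *; destruct (tv I p), (tv I q); simpl in *; congruence.
Qed.

Lemma prob_FM {S} (mu : sentence S -> R) : is_prob mu -> FM mu.
Proof.
  intros (H0 & H1 & H2). split; [auto|split].
  - intros p q E.
    assert (A : mu (tOr p (tNeg q)) = mu p + mu (tNeg q)).
    { apply H2, disj_valid. intro I. rewrite tv_neg, E. destruct (tv I q); reflexivity. }
    assert (B : mu (tOr q (tNeg q)) = mu q + mu (tNeg q)).
    { apply H2, disj_valid. intro I. rewrite tv_neg. destruct (tv I q); reflexivity. }
    rewrite (H1 (tOr p (tNeg q))) in A.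
    rewrite (H1 (tOr q (tNeg q))) in B. lra.
    all: apply valid_tv; intro I; rewrite tv_or, tv_neg; try rewrite E; destruct (tv I q); reflexivity.
  - intros p q D. apply H2, disj_valid, D.
Qed.

Lemma FM_prob {S} (f : sentence S -> R) : FM f -> 0 < f tTrue ->
  is_prob (fun p => f p / f tTrue).
Proof.
  intros (H0 & H1 & H2) Hp. split; [|split].
  - intros p. unfold Rdiv. apply Rmult_le_pos; auto. left; apply Rinv_0_lt_compat; auto.
  - intros p Hv. rewrite (H1 p tTrue). field. lra.
    intro I. rewrite tv_true. apply Hv.
  - intros p q Hd. apply disj_valid in Hd. rewrite H2 by auto. field. lra.
Qed.

Lemma FM_diff {S} (f : sentence S -> R) A B : FM f -> impl B A ->
  f A = f B + f (tAnd A (tNeg B)).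
Proof.
  intros (H0 & H1 & H2) Hi. rewrite <- H2.
  apply H1. intro I. specialize (Hi I). rewrite tv_or, tv_and, tv_neg.
  destruct (tv I A), (tv I B); simpl; auto.
  intro I. rewrite tv_and, tv_neg. destruct (tv I A), (tv I B); reflexivity.
Qed.

Lemma FM_mono {S} (f : sentence S -> R) A B : FM f -> impl B A -> f B <= f A.
Proof.
  intros HF Hi. rewrite (FM_diff f A B HF Hi). pose proof (proj1 HF (tAnd A (tNeg B))). lra.
Qed.

Lemma gaif_approx {S} (nu : sentence S -> R) : FM nu ->
  (gaifman nu <-> forall a b (r s : tm S nil (Arr a b)) eps, 0 < eps ->
     exists l, nu (conjs r s l) < nu (teq r s) + eps).
Proof.
  intros HF. split.
  - intros G a b r s eps He. destruct (G a b r s) as [_ H2].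
    apply NNPP. intros Hn.
    assert (nu (teq r s) + eps <= nu (teq r s)); [|lra].
    apply H2. intros y [l ->]. apply Rnot_lt_le. intros Hl. apply Hn. exists l. exact Hl.
  - intros Ap a b r s. split.
    + intros y [l ->]. apply FM_mono; auto. intros I. apply conjs_eq.
    + intros z Hz. apply Rnot_lt_le. intros Hlt.
      destruct (Ap a b r s (z - nu (teq r s))) as [l Hl]. lra.
      specialize (Hz _ (ex_intro _ l eq_refl)). unfold conjs in Hl. lra.
Qed.

Lemma gaif_dom {S} (mu nu : sentence S -> R) K : FM mu -> FM nu -> gaifman mu -> 0 < K ->
  (forall p, nu p <= K * mu p) -> gaifman nu.
Proof.
  intros Fm Fn Gm HK Hd. apply (gaif_approx nu Fn). intros a b r s eps He.
  destruct (proj1 (gaif_approx mu Fm) Gm a b r s (eps / K)) as [l Hl].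
  apply Rdiv_lt_0_compat; auto.
  exists l.
  assert (Hi : impl (teq r s) (conjs r s l)) by (intro I; apply conjs_eq).
  rewrite (FM_diff nu _ _ Fn Hi). rewrite (FM_diff mu _ _ Fm Hi) in Hl.
  specialize (Hd (tAnd (conjs r s l) (tNeg (teq r s)))).
  assert (K * mu (tAnd (conjs r s l) (tNeg (teq r s))) < eps).
  { apply Rmult_lt_reg_l with (/ K). apply Rinv_0_lt_compat; auto.
    rewrite <- Rmult_assoc, Rinv_l by lra. unfold Rdiv in Hl. lra. }
  lra.
Qed.

Lemma prob_le1 {S} (mu : sentence S -> R) p : is_prob mu -> mu p <= 1.
Proof.
  intros Hp. pose proof (prob_FM mu Hp) as (H0 & _ & _).
  destruct Hp as (_ & H1 & H2).
  assert (E : mu (tOr p (tNeg p)) = mu p + mu (tNeg p)).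
  { apply H2, disj_valid. intro I. rewrite tv_neg. destruct (tv I p); reflexivity. }
  rewrite H1 in E. specialize (H0 (tNeg p)). lra.
  apply valid_tv. intro I. rewrite tv_or, tv_neg. destruct (tv I p); reflexivity.
Qed.

Lemma mix_cournot {S} (chi : nat -> sentence S) P mu :
  (forall phi, has_sep_model phi -> exists i, chi i = phi) ->
  rigid_mixture chi P mu -> cournot mu.
Proof.
  intros Honto (m & mus & Hm & Hs & Hp & _ & Hc & Hmix) phi Hphi.
  destruct (Honto phi Hphi) as [i <-].
  apply Rlt_le_trans with (m i * mus i (chi i)).
  rewrite Hc. specialize (Hm i); lra.
  apply (is_term (fun k => m k * mus k (chi i))). apply Hmix. intros k. apply Rmult_le_pos. left; auto. apply (Hp k).
Qed.

Lemma sb1 d m c N : (forall k, (k <= N)%nat -> d k <= c * m k) -> sum_f_R0 d N <= c * sum_f_R0 m N.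
Proof.
  induction N; intros H; simpl. apply H; lia.
  rewrite Rmult_plus_distr_l. apply Rplus_le_compat. apply IHN; intros; apply H; lia. apply H; lia.
Qed.

Lemma sb2 d m c N : (forall k, d k <= m k) -> (forall k, (k <= N)%nat -> d k <= c * m k) ->
  forall n, (n >= N)%nat -> sum_f_R0 d n <= c * sum_f_R0 m N + (sum_f_R0 m n - sum_f_R0 m N).
Proof.
  intros H1 H2 n Hn. induction Hn.
  - pose proof (sb1 d m c N H2). lra.
  - simpl. specialize (H1 (S m0)). lra.
Qed.

Lemma mix_gaif {Sg} (chi : nat -> sentence Sg) mu : is_prob mu ->
  rigid_mixture chi gaifman mu -> gaifman mu.
Proof.
  intros Hmu (m & mus & Hm & Hs & Hp & Hg & _ & Hmix).
  apply (gaif_approx mu (prob_FM mu Hmu)). intros a b r s eps He.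
  destruct (Hs (eps/4)) as [N HN]. lra.
  specialize (HN N (le_n N)). unfold Rdist in HN. apply Rabs_def2 in HN.
  assert (Hl : forall N, exists l, forall k, (k <= N)%nat ->
     mus k (conjs r s l) < mus k (teq r s) + eps/4).
  { clear HN. induction N0.
    - destruct (proj1 (gaif_approx (mus 0%nat) (prob_FM _ (Hp 0%nat))) (Hg 0%nat) a b r s (eps/4))
        as [l Hl]. lra.
      exists l. intros k Hk. replace k with 0%nat by lia. auto.
    - destruct IHN0 as [l1 H1].
      destruct (proj1 (gaif_approx (mus (S N0)) (prob_FM _ (Hp (S N0)))) (Hg (S N0)) a b r s (eps/4))
        as [l2 H2]. lra.
      exists (l1 ++ l2). intros k Hk.
      destruct (Nat.eq_dec k (S N0)) as [->|Hne].
      + eapply Rle_lt_trans; [|apply H2]. apply FM_mono. apply prob_FM, Hp.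
        intros I HI. apply (conjs_app I a b r s l1 l2 HI).
      + eapply Rle_lt_trans; [|apply (H1 k); lia]. apply FM_mono. apply prob_FM, Hp.
        intros I HI. apply (conjs_app I a b r s l1 l2 HI). }
  destruct (Hl N) as [l Hlk]. exists l.
  set (d := fun k => m k * (mus k (conjs r s l) - mus k (teq r s))).
  assert (Hd : infinite_sum d (mu (conjs r s l) - mu (teq r s))).
  { pose proof (is_plus _ _ _ _ (Hmix (conjs r s l)) (is_scal _ _ (-1) (Hmix (teq r s)))) as HH.
    replace (mu (conjs r s l) - mu (teq r s)) with (mu (conjs r s l) + -1 * mu (teq r s)) by ring.
    revert HH. apply is_ext. intros n. unfold d. ring. }
  assert (Hle : mu (conjs r s l) - mu (teq r s) <= eps/4 * sum_f_R0 m N + (1 - sum_f_R0 m N)).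
  { apply (is_le d _ _ N Hd). intros n Hn.
    pose proof (partial_le m 1 n Hs (fun k => Rlt_le _ _ (Hm k))).
    pose proof (sb2 d m (eps/4) N) as Hsb.
    assert (sum_f_R0 d n <= eps / 4 * sum_f_R0 m N + (sum_f_R0 m n - sum_f_R0 m N)); [|lra].
    apply Hsb; auto.
    - intros k. unfold d. rewrite <- (Rmult_1_r (m k)) at 2. apply Rmult_le_compat_l. left; auto.
      pose proof (prob_le1 (mus k) (conjs r s l) (Hp k)). pose proof (proj1 (Hp k) (teq r s)). lra.
    - intros k Hk. unfold d. rewrite (Rmult_comm (eps/4)). apply Rmult_le_compat_l. left; auto.
      specialize (Hlk k Hk). lra. }
  pose proof (partial_le m 1 N Hs (fun k => Rlt_le _ _ (Hm k))).
  assert (eps / 4 * sum_f_R0 m N <= eps/4 * 1) by (apply Rmult_le_compat_l; lra).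
  lra.
Qed.

Section Constr.
Variable Sg : Sig.
Variable chi : nat -> sentence Sg.
Variable mu : sentence Sg -> R.
Hypothesis Hmu : is_prob mu.
Hypothesis Hc : cournot mu.
Hypothesis Hchi_sep : forall i, has_sep_model (chi i).
Variable j : nat.
Hypothesis Hj : chi j = tTrue.

Let FMmu := prob_FM mu Hmu.

Definition cc (k : nat) : R := (1/2)^(Datatypes.S k).

Lemma cc_pos k : 0 < cc k.
Proof. unfold cc. apply pow_lt. lra. Qed.

Lemma cc_le1 k : cc k <= 1.
Proof. unfold cc. left. apply pow_lt_1_compat. lra. lia. Qed.

Definition w (k : nat) (p : sentence Sg) : R := cc k * mu (tAnd p (chi k)).

Lemma mu_and_le p q : mu (tAnd p q) <= mu p.
Proof. apply FM_mono; auto. intros I. rewrite tv_and. apply andb_prop. Qed.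

Lemma w_nonneg k p : 0 <= w k p.
Proof. unfold w. apply Rmult_le_pos. left; apply cc_pos. apply (proj1 FMmu). Qed.

Lemma w_le k p : w k p <= cc k * mu p.
Proof. unfold w. apply Rmult_le_compat_l. left; apply cc_pos. apply mu_and_le. Qed.

Lemma w_bound p n : sum_f_R0 (fun k => w k p) n <= mu p.
Proof.
  apply Rle_trans with (sum_f_R0 (fun k => cc k * mu p) n).
  apply sum_Rle. intros; apply w_le.
  replace (sum_f_R0 (fun k => cc k * mu p) n) with (mu p * sum_f_R0 (fun k => (1/2)^(Datatypes.S k)) n).
  2: { rewrite scal_sum. apply sum_eq. intros; unfold cc; ring. }
  rewrite geom_sum. pose proof (proj1 FMmu p).
  assert (0 < (1/2)^(Datatypes.S n)) by (apply pow_lt; lra). nra.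
Qed.

Definition Tsig (p : sentence Sg) : {l | infinite_sum (fun k => w k p) l} :=
  ex_sum (fun k => w k p) (mu p) (fun k => w_nonneg k p) (w_bound p).

Definition T p := proj1_sig (Tsig p).

Lemma T_sum p : infinite_sum (fun k => w k p) (T p).
Proof. exact (proj2_sig (Tsig p)). Qed.

Lemma T_nonneg p : 0 <= T p.
Proof. apply (is_nonneg _ _ (T_sum p) (fun k => w_nonneg k p)). Qed.

Lemma T_le p : T p <= mu p.
Proof. apply (is_le _ _ _ 0 (T_sum p)). intros; apply w_bound. Qed.

Lemma w_equiv k p q : equiv p q -> w k p = w k q.
Proof.
  intros E. unfold w. f_equal. apply (proj1 (proj2 FMmu)). intro I. rewrite !tv_and, E. reflexivity.
Qed.

Lemma w_add k p q : disj p q -> w k (tOr p q) = w k p + w k q.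
Proof.
  intros D. unfold w. rewrite <- Rmult_plus_distr_l. f_equal.
  rewrite <- (proj2 (proj2 FMmu)).
  - apply (proj1 (proj2 FMmu)). intro I. rewrite tv_or, !tv_and, tv_or.
    destruct (tv I p), (tv I q), (tv I (chi k)); reflexivity.
  - intro I. specialize (D I). rewrite !tv_and. destruct (tv I p), (tv I q), (tv I (chi k)); simpl in *; auto.
Qed.

Lemma T_equiv p q : equiv p q -> T p = T q.
Proof.
  intros E. apply (uniqueness_sum (fun k => w k p)). apply T_sum.
  apply (is_ext (fun k => w k q)). intros; symmetry; apply w_equiv; auto. apply T_sum.
Qed.

Lemma T_add p q : disj p q -> T (tOr p q) = T p + T q.
Proof.
  intros D. apply (uniqueness_sum (fun k => w k (tOr p q))). apply T_sum.
  apply (is_ext (fun k => w k p + w k q)). intros; symmetry; apply w_add; auto.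
  apply is_plus; apply T_sum.
Qed.

Definition Rm p := mu p - T p.

Definition f (i : nat) (p : sentence Sg) : R :=
  w i p + (if Nat.eq_dec i j then Rm p else 0).

Lemma f_FM i : FM (f i).
Proof.
  destruct FMmu as (M0 & M1 & M2).
  split; [|split]; unfold f.
  - intros p. pose proof (w_nonneg i p). pose proof (T_le p). unfold Rm.
    destruct (Nat.eq_dec i j); lra.
  - intros p q E. rewrite (w_equiv i p q E). unfold Rm. rewrite (M1 p q E), (T_equiv p q E). reflexivity.
  - intros p q D. rewrite (w_add i p q D). unfold Rm. rewrite (M2 p q D), (T_add p q D).
    destruct (Nat.eq_dec i j); ring.
Qed.

Lemma f_le i p : f i p <= 2 * mu p.
Proof.
  unfold f. pose proof (w_le i p). pose proof (cc_le1 i). pose proof (proj1 FMmu p).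
  pose proof (T_nonneg p). unfold Rm.
  assert (cc i * mu p <= mu p) by nra.
  destruct (Nat.eq_dec i j); lra.
Qed.

Lemma mu_true : mu tTrue = 1.
Proof. apply (proj1 (proj2 Hmu)). apply valid_tv. intro; apply tv_true. Qed.

Lemma f_pos i : 0 < f i tTrue.
Proof.
  pose proof (proj1 (f_FM i) tTrue) as _.
  unfold f. assert (0 < w i tTrue).
  { unfold w. apply Rmult_lt_0_compat. apply cc_pos.
    rewrite (proj1 (proj2 FMmu) _ (chi i)). apply Hc, Hchi_sep.
    intro I. rewrite tv_and, tv_true. reflexivity. }
  pose proof (T_le tTrue). unfold Rm. destruct (Nat.eq_dec i j); lra.
Qed.

Definition mm i := f i tTrue.
Definition mus i p := f i p / f i tTrue.

Lemma mus_prob i : is_prob (mus i).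
Proof. apply FM_prob. apply f_FM. apply f_pos. Qed.

Lemma mus_chi i : mus i (chi i) = 1.
Proof.
  unfold mus. replace (f i (chi i)) with (f i tTrue). field. pose proof (f_pos i); lra.
  destruct (Nat.eq_dec i j) as [->|Hne]. rewrite Hj; reflexivity.
  unfold f. destruct (Nat.eq_dec i j); [congruence|].
  rewrite !Rplus_0_r. unfold w. f_equal. apply (proj1 (proj2 FMmu)).
  intro I. rewrite !tv_and, tv_true. destruct (tv I (chi i)); reflexivity.
Qed.

Lemma mix_sum p : infinite_sum (fun i => mm i * mus i p) (mu p).
Proof.
  replace (mu p) with (T p + Rm p) by (unfold Rm; ring).
  apply (is_ext (fun i => w i p + (if Nat.eq_dec i j then Rm p else 0))).
  - intros i. unfold mm, mus. change (w i p + (if Nat.eq_dec i j then Rm p else 0)) with (f i p).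
    field. pose proof (f_pos i); lra.
  - apply is_plus. apply T_sum. apply is_ind.
Qed.

Lemma mm_sum : infinite_sum mm 1.
Proof.
  rewrite <- mu_true.
  apply (is_ext (fun i => mm i * mus i tTrue)). 2: apply mix_sum.
  intros i. unfold mus, mm. field. pose proof (f_pos i); lra.
Qed.

Lemma mus_gaif i : gaifman mu -> gaifman (mus i).
Proof.
  intros G. apply (gaif_dom mu (mus i) (2 / f i tTrue) FMmu (prob_FM _ (mus_prob i)) G).
  apply Rdiv_lt_0_compat. lra. apply f_pos.
  intros p. unfold mus. pose proof (f_le i p). pose proof (f_pos i).
  unfold Rdiv. rewrite Rmult_assoc, (Rmult_comm (/ _)), <- Rmult_assoc.
  apply Rmult_le_compat_r. left; apply Rinv_0_lt_compat; auto. lra.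
Qed.
Lemma construct_g (P : (sentence Sg -> R) -> Prop) : (forall i, P (mus i)) -> rigid_mixture chi P mu.
Proof.
  intros HP. exists mm, mus. split; [|split; [|split; [|split; [|split]]]].
  - intros i; apply f_pos.
  - apply mm_sum.
  - apply mus_prob.
  - auto.
  - apply mus_chi.
  - apply mix_sum.
Qed.
End Constr.

Theorem mainTheorem3 (S : Sig)
  (Hcountable : exists enc : const S -> nat, forall c d, enc c = enc d -> c = d)
  (chi : nat -> sentence S)
  (Hchi_sep : forall i, has_sep_model (chi i))
  (Hchi_onto : forall phi, has_sep_model phi -> exists i, chi i = phi)
  (Hchi_inj : forall i j, chi i = chi j -> i = j)
  (mu : sentence S -> R) (Hmu : is_prob mu) :
  (cournot mu <-> rigid_mixture chi (fun _ => True) mu) /\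
  (cournot mu /\ gaifman mu <-> rigid_mixture chi gaifman mu).
Proof.
  assert (Hj : exists j, chi j = tTrue).
  { apply Hchi_onto. destruct (Hchi_sep 0%nat) as [I [HI _]]. exists I. split; auto.
    apply tv_true. }
  destruct Hj as [j Hj].
  split; split.
  - intros Hc. apply (construct_g S chi mu Hmu Hc Hchi_sep j Hj). auto.
  - apply mix_cournot; auto.
  - intros [Hc G]. apply (construct_g S chi mu Hmu Hc Hchi_sep j Hj).
    intros i. apply mus_gaif; auto.
  - intros H. split. eapply mix_cournot; eauto. eapply mix_gaif; eauto.
Qed.
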